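(* Let $\nu\geq 1$ and $n_d>1$ be integers and let $\boldsymbol{\eta}^1,\ldots,\boldsymbol{\eta}^{n_d}\in\mathbb{R}^\nu$ satisfy $\frac{1}{n_d}\sum_{j=1}^{n_d}\boldsymbol{\eta}^j=\mathbf{0}_\nu$ and $\frac{1}{n_d-1}\sum_{j=1}^{n_d}\boldsymbol{\eta}^j\otimes\boldsymbol{\eta}^j=[I_\nu]$. Set $s=\left(\frac{4}{n_d(2+\nu)}\right)^{1/(\nu+4)}$, $\hat s=s/\sqrt{s^2+(n_d-1)/n_d}$, and $$p_{\mathbf{H}}(\mathbf{y})=\frac{1}{n_d}\sum_{j=1}^{n_d}\frac{1}{(\sqrt{2\pi}\,\hat s)^\nu}\exp\Big(-\frac{1}{2\hat s^2}\Big\|\mathbf{y}-\frac{\hat s}{s}\boldsymbol{\eta}^j\Big\|^2\Big),\quad \mathbf{y}\in\mathbb{R}^\nu .$$ Let $f=\log p_{\mathbf{H}}$, $\mathbf{g}=(g_1,\ldots,g_\nu)=\nabla f$ (so $g_j=\partial f/\partial y_j$), $\hat g=\|\mathbf{g}\|$, and $h=\nabla^2 f=\sum_{j=1}^\nu\partial^2 f/\partial y_j^2$. Let $\mathbf{Y}$ be an $\mathbb{R}^\nu$-valued normalized Gaussian random vector (density $p_{\mathbf{Y}}(\mathbf{y})=(2\pi)^{-\nu/2}e^{-\|\mathbf{y}\|^2/2}$) and $\mathbb{H}=L^2(\mathbb{R}^\nu;p_{\mathbf{Y}}(\mathbf{y})\,d\mathbf{y})$. Then: (i) $f$ is continuous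 on $\mathbb{R}^\nu$ and belongs to $\mathbb{H}$, i.e. $E\{f(\mathbf{Y})^2\}=\|f\|_{\mathbb{H}}^2<+\infty$; (ii) $\mathbf{g}$ is a continuous $\mathbb{R}^\nu$-valued function on $\mathbb{R}^\nu$, each $g_j$ ($j=1,\ldots,\nu$) belongs to $\mathbb{H}$, $\hat g$ belongs to $\mathbb{H}$, and $E\{\hat g(\mathbf{Y})^4\}<+\infty$; (iii) $h$ is a continuous real-valued function on $\mathbb{R}^\nu$ and belongs to $\mathbb{H}$, i.e. $E\{|h(\mathbf{Y})|^2\}=\|h\|_{\mathbb{H}}^2<+\infty$.
   Context: $\mathbb{H}=L^2(\mathbb{R}^\nu;p_{\mathbf{Y}}(\mathbf{y})\,d\mathbf{y})$ is the Hilbert space of real functions on $\mathbb{R}^\nu$ square integrable with respect to the standard Gaussian measure, with inner product $\langle u,v\rangle_{\mathbb{H}}=\int_{\mathbb{R}^\nu}u(\mathbf{y})v(\mathbf{y})p_{\mathbf{Y}}(\mathbf{y})\,d\mathbf{y}=E\{u(\mathbf{Y})v(\mathbf{Y})\}$. The function $p_{\mathbf{H}}$ is the (modified) Gaussian kernel density estimate built from the training points $\boldsymbol{\eta}^j$. *)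

(* Defs.v *)
From HB Require Import structures.
From mathcomp Require Import all_boot all_order all_algebra.
From mathcomp Require Import all_classical all_reals all_analysis.
Set Implicit Arguments. Unset Strict Implicit. Unset Printing Implicit Defensive.
Import Order.TTheory GRing.Theory Num.Theory.
Import numFieldNormedType.Exports.
Local Open Scope classical_set_scope.
Local Open Scope ring_scope.

Section Defs.
Variable R : realType.

Definition sqnorm n (y : 'rV[R]_n) : R := \sum_(i < n) (y 0 i) ^+ 2.
Definition enorm n (y : 'rV[R]_n) : R := Num.sqrt (sqnorm y).

(* Iterated Lebesgue integral over R^n of a [0,+oo]-valued function
   (coordinate by coordinate; by Tonelli this is the integral w.r.t. the
   n-dimensional Lebesgue measure for measurable nonnegative integrands). *)
Fixpoint lebesgue_iter (n : nat) : ('rV[R]_n -> \bar R) -> \bar R :=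
  match n with
  | 0 => fun F => F 0
  | n'.+1 => fun F =>
      (\int[@lebesgue_measure R]_(x in [set: R])
          lebesgue_iter (fun v : 'rV[R]_n' => F (row_mx (\row_(k < 1) x) v)))%E
  end.

Definition pY n (y : 'rV[R]_n) : R :=
  ((2 * pi) `^ (- (n%:R / 2))) * expR (- (sqnorm y) / 2).

Definition gauss_expect n (F : 'rV[R]_n -> R) : \bar R :=
  lebesgue_iter (fun y => (F y * pY y)%:E).

Definition in_H n (u : 'rV[R]_n -> R) : Prop :=
  (gauss_expect (fun y => (u y ^+ 2)%R) < +oo)%E.

Definition kde_s (nu nd : nat) : R :=
  (4 / (nd%:R * (2 + nu%:R))) `^ (1 / (nu%:R + 4)).
Definition kde_shat (nu nd : nat) : R :=
  kde_s nu nd / Num.sqrt (kde_s nu nd ^+ 2 + (nd%:R - 1) / nd%:R).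

Definition pH (nu nd : nat) (eta : 'I_nd -> 'rV[R]_nu) (y : 'rV[R]_nu) : R :=
  let s := kde_s nu nd in let sh := kde_shat nu nd in
  nd%:R^-1 * \sum_(j < nd)
     ((Num.sqrt (2 * pi) * sh) ^+ nu)^-1 *
     expR (- (1 / (2 * sh ^+ 2)) * sqnorm (y - (sh / s) *: eta j)).

Definition ebasis nu (j : 'I_nu) : 'rV[R]_nu := delta_mx 0 j.

End Defs.
Arguments ebasis {R nu} j.

(* Main.v *)
Require Import Defs.
From HB Require Import structures.
From mathcomp Require Import all_boot all_order all_algebra.
From mathcomp Require Import all_classical all_reals all_analysis.
From mathcomp Require Import ring lra.
Import Order.TTheory GRing.Theory Num.Theory.
Import numFieldNormedType.Exports.
Local Open Scope classical_set_scope.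
Local Open Scope ring_scope.

Section Gauss.
Variable R : realType.

Definition gaussG (x : R) := normal_pdf 0 2 x.

Lemma gaussG_ge0 x : 0 <= gaussG x.
Proof. exact: normal_pdf_ge0. Qed.

Lemma gaussGE x : gaussG x = normal_peak (2:R) * expR (- (x ^+ 2 / 8)).
Proof.
rewrite /gaussG normal_pdfE ?pnatr_eq0 //= /normal_fun subr0 mulNr.
congr (_ * expR (- (_ / _))). by rewrite -natrX -mulr_natr -natrM.
Qed.

Lemma row_mx0l n (x : R) (v : 'rV[R]_n) : (row_mx (\row_(k < 1) x) v : 'rV_(n.+1)) 0 ord0 = x.
Proof.
have -> : (ord0 : 'I_(n.+1)) = lshift n (ord0 : 'I_1) by apply/val_inj.
by rewrite (@row_mxEl _ 1 1 n) mxE.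
Qed.

Lemma row_mx0r n (x : R) (v : 'rV[R]_n) i : (row_mx (\row_(k < 1) x) v : 'rV_(n.+1)) 0 (lift ord0 i) = v 0 i.
Proof.
have -> : (lift ord0 i : 'I_(n.+1)) = rshift 1 i by apply/val_inj.
by rewrite (@row_mxEr _ 1 1 n).
Qed.

Local Open Scope ereal_scope.

Lemma le_integralT (f g : R -> \bar R) : (forall x, 0 <= f x) -> (forall x, f x <= g x) ->
  \int[@lebesgue_measure R]_(x in [set: R]) f x <= \int[@lebesgue_measure R]_(x in [set: R]) g x.
Proof.
move=> f0 fg; rewrite !ge0_integralTE //; last by move=> x; exact: le_trans (f0 x) (fg x).
apply: ge_ereal_sup => _ [h hf <-]; apply: ereal_sup_ubound; exists h => // x.
exact: le_trans (hf x) (fg x).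
Qed.

Lemma iter_ge0 n (F : 'rV[R]_n -> \bar R) : (forall y, 0 <= F y) -> 0 <= lebesgue_iter F.
Proof.
elim: n F => [|n IH] F F0 /=; first exact: F0.
by apply: integral_ge0 => x _; apply: IH => v; exact: F0.
Qed.

Lemma iter_bound n (F : 'rV[R]_n -> R) (C : R) : (0 <= C)%R -> (forall y, 0 <= F y)%R ->
  (forall y, F y <= C * \prod_(i < n) gaussG (y 0 i))%R ->
  lebesgue_iter (fun y => (F y)%:E) <= C%:E.
Proof.
elim: n F C => [|n IH] F C C0 F0 FC /=.
  by rewrite lee_fin; have := FC 0%R; rewrite big_ord0 mulr1.
apply: (@le_trans _ _ (\int[@lebesgue_measure R]_(x in [set: R]) (C * gaussG x)%:E)).
  apply: le_integralT => x; first by apply: iter_ge0 => v; rewrite lee_fin F0.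
  apply: IH => [|v|v]; first exact: mulr_ge0 C0 (gaussG_ge0 x).
    exact: F0.
  have := FC (row_mx (\row_(k<1) x) v); rewrite big_ord_recl row_mx0l.
  under eq_bigr do rewrite row_mx0r.
  by rewrite mulrA.
under eq_integral do rewrite EFinM.
rewrite integralZl //=; last exact: integrable_normal_pdf.
by rewrite /gaussG integral_normal_pdf mule1.
Qed.

End Gauss.
Arguments gaussG {R} x.
Arguments iter_bound {R n} F C.

Section Poly.
Variable R : realType.

Lemma sqnorm_ge0 n (y : 'rV[R]_n) : 0 <= sqnorm y.
Proof. by apply: sumr_ge0 => i _; exact: sqr_ge0. Qed.

Lemma prodG n (y : 'rV[R]_n) :
  \prod_(i < n) gaussG (y 0 i) = normal_peak (2:R) ^+ n * expR (- (sqnorm y / 8)).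
Proof.
under eq_bigr do rewrite gaussGE.
rewrite big_split /= prodr_const card_ord; congr (_ * _).
by rewrite /sqnorm mulr_suml -sumrN expR_sum.
Qed.

Lemma key_ineq (Q : R) (m : nat) : 0 <= Q ->
  (1 + Q) ^+ m * expR (- Q / 2) <= (4 * m.+1%:R) ^+ m * expR (- (Q / 8)).
Proof.
move=> Q0; set L : R := 4 * m.+1%:R.
have L1 : 1 <= L.
  rewrite /L; have : 1 <= m.+1%:R :> R by rewrite ler1n.
  lra.
have L0 : 0 < L by lra.
have h1 : 1 + Q <= L * expR (Q / L).
  apply: (@le_trans _ _ (L * (1 + Q / L))).
    rewrite mulrDr mulr1 mulrCA divff ?gt_eqF // mulr1.
    by lra.
  by rewrite ler_pM2l //; exact: expR_ge1Dx.
have h2 : (1 + Q) ^+ m <= L ^+ m * expR (m%:R * (Q / L)).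
  rewrite expRM_natl -exprMn; apply: lerXn2r => //; rewrite ?nnegrE //; lra.
apply: (@le_trans _ _ (L ^+ m * expR (m%:R * (Q / L)) * expR (- Q / 2))).
  by rewrite ler_wpM2r ?expR_ge0.
rewrite -mulrA; apply: ler_wpM2l; first exact: exprn_ge0 (ltW L0).
rewrite -expRD ler_expR.
have hm : m%:R / m.+1%:R <= 1 :> R by rewrite ler_pdivrMr ?ltr0n // mul1r ler_nat.
have -> : m%:R * (Q / L) = Q * (m%:R / m.+1%:R) / 4 by rewrite /L invfM; ring.
move: hm; set t := m%:R / m.+1%:R => hm.
nra.

Qed.

Lemma gauss_poly n (F : 'rV[R]_n -> R) (K : R) (m : nat) : 0 <= K ->
  (forall y, 0 <= F y) -> (forall y, F y <= K * (1 + sqnorm y) ^+ m) ->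
  (gauss_expect F < +oo)%E.
Proof.
move=> K0 F0 FK; rewrite /gauss_expect.
set c : R := (2 * pi) `^ (- (n%:R / 2)).
have c0 : 0 < c by rewrite powR_gt0 // mulr_gt0 ?pi_gt0.
have p0 : 0 < normal_peak (2:R) by apply: normal_peak_gt0; rewrite pnatr_eq0.
set L : R := 4 * m.+1%:R.
set C : R := K * c * L ^+ m / normal_peak (2:R) ^+ n.
have L0 : 0 <= L by rewrite /L mulr_ge0 // ler0n.
have C0 : 0 <= C.
  rewrite /C; apply: mulr_ge0; last by rewrite invr_ge0; apply: exprn_ge0; exact: ltW.
  by apply: mulr_ge0; [apply: mulr_ge0 => //; exact: ltW|exact: exprn_ge0].
apply: (@le_lt_trans _ _ C%:E); last exact: ltry.
apply: iter_bound => // [y|y].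
  by rewrite /pY mulr_ge0 // mulr_ge0 ?expR_ge0 ?powR_ge0.
rewrite prodG /pY -/c /C.
have pn : normal_peak (2:R) ^+ n != 0 by rewrite expf_neq0 // gt_eqF.
rewrite -[K * c * L ^+ m / _ * _]mulrA [_^-1 * _]mulrA mulVf // mul1r.
apply: (@le_trans _ _ (K * (1 + sqnorm y) ^+ m * (c * expR (- sqnorm y / 2)))).
  by rewrite ler_wpM2r // mulr_ge0 ?expR_ge0 ?ltW.
have kk := @key_ineq (sqnorm y) m (@sqnorm_ge0 _ y).
have Kc : 0 <= K * c by apply: mulr_ge0 K0 (ltW c0).
rewrite [X in X <= _](_ : _ = K * c * ((1 + sqnorm y) ^+ m * expR (- sqnorm y / 2))); last by ring.
rewrite -[K * c * L ^+ m * _]mulrA.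
exact: ler_wpM2l.
Qed.

End Poly.

Set Implicit Arguments. Unset Strict Implicit.

Section Helpers.
Variables (R : realType) (n : nat).
Local Notation V := 'rV[R]_n.
Implicit Types (f g u : V -> R) (x v : V).

Lemma isd_coord x v i : is_derive x v (fun z : V => z 0 i) (v 0 i).
Proof.
apply: DeriveDef.
  have hd : derivable (fun t : V => t) x v by exact: derivable_id.
  by move/derivable_mxP : hd; apply.
have hd : derivable (fun t : V => t) x v by exact: derivable_id.
have := @derive_mx R V 1 n (fun t => t) x v hd.
by rewrite derive_id => /(congr1 (fun M : 'rV[R]_n => M 0 i)); rewrite mxE.
Qed.

Lemma isd_M f g x v df dg : is_derive x v f df -> is_derive x v g dg ->
  is_derive x v (fun y => f y * g y) (f x * dg + g x * df).
Proof. by move=> hf hg; exact: (is_deriveM hf hg). Qed.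

Lemma isd_D f g x v df dg : is_derive x v f df -> is_derive x v g dg ->
  is_derive x v (fun y => f y + g y) (df + dg).
Proof. by move=> hf hg; exact: (is_deriveD hf hg). Qed.

Lemma isd_B f g x v df dg : is_derive x v f df -> is_derive x v g dg ->
  is_derive x v (fun y => f y - g y) (df - dg).
Proof. by move=> hf hg; exact: (is_deriveB hf hg). Qed.

Lemma isd_cst (c : R) x v : is_derive x v (fun _ : V => c) 0.
Proof. exact: is_derive_cst. Qed.

Lemma isd_sum m (h : 'I_m -> V -> R) x v (dh : 'I_m -> R) :
  (forall i, is_derive x v (h i) (dh i)) ->
  is_derive x v (fun y => \sum_(i < m) h i y) (\sum_(i < m) dh i).
Proof. by move=> H; rewrite -fct_sumE; exact: is_derive_sum. Qed.

Lemma isd_V f x v df : f x != 0 -> is_derive x v f df ->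
  is_derive x v (fun y => (f y)^-1) (- (f x) ^- 2 * df).
Proof.
move=> fx [d <-]; apply: (DeriveDef (derivableV fx d)).
by rewrite deriveV.
Qed.

Lemma derive1P_val f x v : 'D_v f x = 'D_1 (fun h : R => f (h *: v + x)) 0.
Proof.
rewrite /derive; set g1 := fun h => h^-1 *: _; set g2 := fun h => h^-1 *: _.
suff -> : g1 = g2 by [].
by rewrite funeqE /g1 /g2 => h /=; rewrite addr0 scale0r add0r [_%:A]mulr1.
Qed.

Lemma isd_comp (phi : R -> R) u x v du dphi :
  is_derive x v u du -> is_derive (u x) 1 phi dphi ->
  is_derive x v (fun y => phi (u y)) (dphi * du).
Proof.
move=> [ud <-] [pd <-].
pose w := fun h : R => u (h *: v + x).
have wd : derivable w 0 1 by exact: ((derivable1P u x v).1 ud).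
have w0 : w 0 = u x by rewrite /w scale0r add0r.
have pd' : derivable phi (w 0) 1 by rewrite w0.
have cd : derivable (phi \o w) 0 1.
  apply/derivable1_diffP; apply: differentiable_comp; exact/derivable1_diffP.
apply: DeriveDef; first exact: ((derivable1P (fun y => phi (u y)) x v).2 cd).
rewrite derive1P_val -/w.
have -> : (fun h : R => phi (u (h *: v + x))) = phi \o w by [].
rewrite -derive1E derive1_comp // !derive1E w0.
by rewrite -derive1P_val.
Qed.

Lemma isd_exp u x v du : is_derive x v u du ->
  is_derive x v (fun y => expR (u y)) (expR (u x) * du).
Proof. by move=> hu; apply: isd_comp hu _. Qed.

Lemma isd_ln u x v du : 0 < u x -> is_derive x v u du ->
  is_derive x v (fun y => ln (u y)) ((u x)^-1 * du).
Proof. by move=> ux hu; apply: isd_comp hu (is_derive1_ln ux). Qed.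

Lemma dif_M f g x : differentiable f x -> differentiable g x ->
  differentiable (fun y => f y * g y) x.
Proof. by move=> hf hg; exact: (differentiableM hf hg). Qed.

Lemma dif_D f g x : differentiable f x -> differentiable g x ->
  differentiable (fun y => f y + g y) x.
Proof. by move=> hf hg; exact: (differentiableD hf hg). Qed.

Lemma dif_B f g x : differentiable f x -> differentiable g x ->
  differentiable (fun y => f y - g y) x.
Proof. by move=> hf hg; exact: (differentiableB hf hg). Qed.

Lemma dif_cst (c : R) x : differentiable (fun _ : V => c) x.
Proof. exact: differentiable_cst. Qed.

Lemma dif_coord x i : differentiable (fun z : V => z 0 i) x.
Proof. exact: differentiable_coord. Qed.

Lemma dif_sum m (h : 'I_m -> V -> R) x :
  (forall i, differentiable (h i) x) ->
  differentiable (fun y => \sum_(i < m) h i y) x.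
Proof. by move=> H; rewrite -fct_sumE; exact: differentiable_sum. Qed.

Lemma dif_V f x : differentiable f x -> f x != 0 -> differentiable (fun y => (f y)^-1) x.
Proof. exact: differentiableV. Qed.

Lemma dif_exp u x : differentiable u x -> differentiable (fun y => expR (u y)) x.
Proof.
move=> du; apply: (@differentiable_comp _ _ _ _ u expR x du).
exact/derivable1_diffP/derivable_expR.
Qed.

Lemma dif_ln u x : differentiable u x -> 0 < u x -> differentiable (fun y => ln (u y)) x.
Proof.
move=> du ux.
have dl : differentiable (@ln R) (u x).
  by apply/derivable1_diffP; apply: ex_derive; exact: is_derive1_ln.
exact: (differentiable_comp du dl).
Qed.

Lemma dif_X f x m : differentiable f x -> differentiable (fun y => f y ^+ m.+1) x.
Proof. move=> hf; have h := differentiableX m hf. rewrite exprfctE in h. exact: h. Qed.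

End Helpers.

Section KDE.
Variables (R : realType) (nu nd : nat) (a c0 : R) (b : 'I_nd -> 'rV[R]_nu).
Hypothesis a0 : 0 < a.
Hypothesis c00 : 0 < c0.
Hypothesis nd0 : (0 < nd)%N.
Local Notation V := 'rV[R]_nu.

Definition Ek k (y : V) := expR (- a * sqnorm (y - b k)).
Definition Sf (y : V) := \sum_(k < nd) Ek k y.
Definition Tf j (y : V) := \sum_(k < nd) (-2 * a * (y 0 j - b k 0 j)) * Ek k y.
Definition Uf j (y : V) := \sum_(k < nd) (-2 * a + 4 * a ^+ 2 * (y 0 j - b k 0 j) ^+ 2) * Ek k y.
Definition Hf j (y : V) := (Uf j y * Sf y - Tf j y ^+ 2) / Sf y ^+ 2.
Definition Gf j (y : V) := Tf j y / Sf y.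
Definition Ff (y : V) := ln (c0 * Sf y).

Lemma sum_ebasis (F : 'I_nu -> R) j : \sum_(i < nu) F i * (ebasis j : V) 0 i = F j.
Proof.
rewrite (bigD1 j) //= big1 => [|i ij]; rewrite /ebasis mxE.
  by rewrite !eqxx mulr1 addr0.
by rewrite (negbTE ij) andbF mulr0.
Qed.

Lemma ebasis_jj j : (ebasis j : V) 0 j = 1.
Proof. by rewrite /ebasis mxE !eqxx. Qed.

Lemma sqnormE (c : V) : (fun z : V => sqnorm (z - c)) =
  (fun z => \sum_(i < nu) (z 0 i - c 0 i) * (z 0 i - c 0 i)).
Proof. by apply: funext => z; rewrite /sqnorm; apply: eq_bigr => i _; rewrite !mxE expr2. Qed.

Lemma dsq k (y : V) j : is_derive y (ebasis j) (fun z => sqnorm (z - b k)) (2 * (y 0 j - b k 0 j)).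
Proof.
have hi i : is_derive y (ebasis j) (fun z : V => (z 0 i - b k 0 i) * (z 0 i - b k 0 i))
    (2 * (y 0 i - b k 0 i) * (ebasis j : V) 0 i).
  have h1 : is_derive y (ebasis j) (fun z : V => z 0 i - b k 0 i) ((ebasis j : V) 0 i - 0).
    exact: (isd_B (isd_coord _ _ i) (isd_cst _ _ _)).
  have h2 := isd_M h1 h1.
  apply: (is_derive_eq h2).
  by ring.
rewrite sqnormE; apply: (is_derive_eq (isd_sum hi)).
by rewrite sum_ebasis.
Qed.

Lemma dE k (y : V) j : is_derive y (ebasis j) (Ek k) (-2 * a * (y 0 j - b k 0 j) * Ek k y).
Proof.
rewrite /Ek; apply: (is_derive_eq (isd_exp (isd_M (isd_cst (- a) _ _) (dsq k y j)))).
ring.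
Qed.

Lemma dS (y : V) j : is_derive y (ebasis j) Sf (Tf j y).
Proof. by rewrite /Sf /Tf; apply: isd_sum => k; exact: dE. Qed.

Lemma Ek_gt0 k y : 0 < Ek k y.
Proof. exact: expR_gt0. Qed.

Lemma Ek_le1 k y : Ek k y <= 1.
Proof.
rewrite /Ek expR_le1 mulNr oppr_le0; apply: mulr_ge0; first exact: ltW.
by apply: sumr_ge0 => i _; exact: sqr_ge0.
Qed.

Lemma Ek_le_S k y : Ek k y <= Sf y.
Proof.
rewrite /Sf (bigD1 k) //= lerDl; apply: sumr_ge0 => i _; exact: ltW (Ek_gt0 _ _).
Qed.

Lemma S_gt0 y : 0 < Sf y.
Proof. exact: lt_le_trans (Ek_gt0 (Ordinal nd0) y) (Ek_le_S _ _). Qed.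

Lemma S_neq0 y : Sf y != 0.
Proof. by rewrite gt_eqF // S_gt0. Qed.

Lemma dF (y : V) j : is_derive y (ebasis j) Ff (Gf j y).
Proof.
rewrite /Ff /Gf; apply: is_derive_eq.
  apply: (@isd_ln _ _ (fun z => c0 * Sf z)); first by rewrite mulr_gt0 // S_gt0.
  exact: (isd_M (isd_cst c0 _ _) (dS y j)).
have := S_neq0 y; have := c00; move=> h1 h2.
field; by rewrite h2 gt_eqF.
Qed.

Lemma dT (y : V) j : is_derive y (ebasis j) (Tf j) (Uf j y).
Proof.
have hk k : is_derive y (ebasis j) (fun z => (-2 * a * (z 0 j - b k 0 j)) * Ek k z)
    ((-2 * a + 4 * a ^+ 2 * (y 0 j - b k 0 j) ^+ 2) * Ek k y).
  have h1 := isd_M (isd_cst (-2 * a) y (ebasis j))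
    (isd_B (isd_coord y (ebasis j) j) (isd_cst (b k 0 j) y (ebasis j))).
  apply: (is_derive_eq (isd_M h1 (dE k y j))).
  rewrite ebasis_jj; ring.
by rewrite /Tf /Uf; exact: (isd_sum hk).
Qed.

Lemma dG (y : V) j : is_derive y (ebasis j) (Gf j) (Hf j y).
Proof.
rewrite /Gf; apply: is_derive_eq.
  exact: (isd_M (dT y j) (isd_V (S_neq0 y) (dS y j))).
rewrite /Hf; have := S_neq0 y => h; field; exact: h.
Qed.

Lemma dif_E k y : differentiable (Ek k) y.
Proof.
rewrite /Ek; apply: dif_exp; apply: dif_M; first exact: dif_cst.
rewrite sqnormE; apply: dif_sum => i.
by apply: dif_M; apply: dif_B; [exact: dif_coord|exact: dif_cst|exact: dif_coord|exact: dif_cst].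
Qed.

Lemma dif_S y : differentiable Sf y.
Proof. by rewrite /Sf; apply: dif_sum => k; exact: dif_E. Qed.

Lemma dif_T j y : differentiable (Tf j) y.
Proof.
rewrite /Tf; apply: dif_sum => k; apply: dif_M; last exact: dif_E.
apply: dif_M; first exact: dif_cst.
apply: dif_B; [exact: dif_coord|exact: dif_cst].
Qed.

Lemma dif_U j y : differentiable (Uf j) y.
Proof.
rewrite /Uf; apply: dif_sum => k; apply: dif_M; last exact: dif_E.
apply: dif_D; first exact: dif_cst.
apply: dif_M; first exact: dif_cst.
apply: dif_X; apply: dif_B; [exact: dif_coord|exact: dif_cst].
Qed.

Lemma dif_G j y : differentiable (Gf j) y.
Proof.
rewrite /Gf; apply: dif_M; first exact: dif_T.
apply: dif_V; [exact: dif_S|exact: S_neq0].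
Qed.

Lemma dif_H j y : differentiable (Hf j) y.
Proof.
rewrite /Hf; apply: dif_M.
  apply: dif_B; last by apply: dif_X; exact: dif_T.
  apply: dif_M; [exact: dif_U|exact: dif_S].
apply: dif_V; first by apply: dif_X; exact: dif_S.
by rewrite expf_neq0 // S_neq0.
Qed.

Lemma dif_F y : differentiable Ff y.
Proof.
rewrite /Ff; apply: dif_ln; last by rewrite mulr_gt0 // S_gt0.
apply: dif_M; [exact: dif_cst|exact: dif_S].
Qed.

Definition Mb := \sum_(k < nd) \sum_(i < nu) `|b k 0 i|.

Lemma Mb_ge0 : 0 <= Mb.
Proof. by apply: sumr_ge0 => k _; apply: sumr_ge0 => i _; exact: normr_ge0. Qed.

Lemma absb k j : `|b k 0 j| <= Mb.
Proof.
apply: (@le_trans _ _ (\sum_(i < nu) `|b k 0 i|)).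
  by rewrite (bigD1 j) //= lerDl; apply: sumr_ge0 => i _; exact: normr_ge0.
rewrite /Mb (bigD1 k) //= lerDl.
by apply: sumr_ge0 => k' _; apply: sumr_ge0 => i _; exact: normr_ge0.
Qed.

Lemma sq_le_Q (y : V) j : y 0 j ^+ 2 <= sqnorm y.
Proof. by rewrite /sqnorm (bigD1 j) //= lerDl; apply: sumr_ge0 => i _; exact: sqr_ge0. Qed.

Lemma absy (y : V) j : `|y 0 j| <= 1 + sqnorm y.
Proof.
have h := sq_le_Q y j.
rewrite -real_normK ?num_real // in h.
move: h; set t := `|y 0 j|; have t0 : 0 <= t by exact: normr_ge0.
move=> h; nra.
Qed.

Lemma absd k j (y : V) : `|y 0 j - b k 0 j| <= 1 + Mb + sqnorm y.
Proof.
apply: le_trans (ler_normB _ _) _.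
have := absy y j; have := absb k j; lra.
Qed.

Lemma Q_ge0 (y : V) : 0 <= sqnorm y.
Proof. by apply: sumr_ge0 => i _; exact: sqr_ge0. Qed.

Lemma T_bound j (y : V) : `|Tf j y| <= 2 * a * (1 + Mb + sqnorm y) * Sf y.
Proof.
rewrite /Tf /Sf mulr_sumr; apply: le_trans (ler_norm_sum _ _ _) _.
apply: ler_sum => k _.
rewrite normrM (ger0_norm (ltW (Ek_gt0 _ _))); apply: ler_wpM2r; first exact: ltW (Ek_gt0 _ _).
rewrite !normrM normrN (ger0_norm (ltW a0)) (ger0_norm (ler0n _ 2)) -mulrA.
have hN := absd k j y.
rewrite (mulrA 2 a); apply: ler_wpM2l; last exact: hN.
by apply: mulr_ge0; [|exact: ltW].
Qed.

Lemma G_bound j (y : V) : `|Gf j y| <= 2 * a * (1 + Mb + sqnorm y).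
Proof.
rewrite /Gf normrM normfV (ger0_norm (ltW (S_gt0 y))) ler_pdivrMr ?S_gt0 //.
exact: T_bound.
Qed.

Lemma U_bound j (y : V) :
  `|Uf j y| <= (2 * a + 4 * a ^+ 2 * (1 + Mb + sqnorm y) ^+ 2) * Sf y.
Proof.
rewrite /Uf /Sf mulr_sumr; apply: le_trans (ler_norm_sum _ _ _) _.
apply: ler_sum => k _.
rewrite normrM (ger0_norm (ltW (Ek_gt0 _ _))); apply: ler_wpM2r; first exact: ltW (Ek_gt0 _ _).
have hd := absd k j y.
have := normr_ge0 (y 0 j - b k 0 j).
rewrite -(real_normK (num_real (y 0 j - b k 0 j))).
move: hd; set d := `|y 0 j - b k 0 j|; set B := 1 + Mb + sqnorm y => hd d0.
apply: le_trans (ler_normD _ _) _.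
rewrite normrM normrN (ger0_norm (ltW a0)) (ger0_norm (ler0n _ 2)).
have a2 : 0 <= a ^+ 2 by exact: exprn_ge0 (ltW a0).
have e : `|4 * a ^+ 2 * d ^+ 2| = 4 * a ^+ 2 * d ^+ 2.
  by apply: ger0_norm; apply: mulr_ge0; [apply: mulr_ge0|exact: sqr_ge0].
rewrite e lerD2l.
have : d ^+ 2 <= B ^+ 2 by apply: lerXn2r; rewrite ?nnegrE //; lra.
move=> hB; apply: ler_wpM2l => //; exact: mulr_ge0.
Qed.

Lemma H_bound j (y : V) : `|Hf j y| <= 2 * a + 8 * a ^+ 2 * (1 + Mb + sqnorm y) ^+ 2.
Proof.
have -> : Hf j y = Uf j y / Sf y - Gf j y ^+ 2.
  rewrite /Hf /Gf; have := S_neq0 y => h; field; exact: h.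
apply: le_trans (ler_normB _ _) _.
have h1 : `|Uf j y / Sf y| <= 2 * a + 4 * a ^+ 2 * (1 + Mb + sqnorm y) ^+ 2.
  rewrite normrM normfV (ger0_norm (ltW (S_gt0 y))) ler_pdivrMr ?S_gt0 //.
  exact: U_bound.
have h2 : `|Gf j y ^+ 2| <= 4 * a ^+ 2 * (1 + Mb + sqnorm y) ^+ 2.
  rewrite normrX; have := G_bound j y; have := normr_ge0 (Gf j y).
  move=> g0 g1.
  have : `|Gf j y| ^+ 2 <= (2 * a * (1 + Mb + sqnorm y)) ^+ 2.
    by apply: lerXn2r; rewrite ?nnegrE //; exact: le_trans g1.
  by rewrite !exprMn -natrX.
apply: le_trans (lerD h1 h2) _; set X := (1 + Mb + _) ^+ 2; set Y := a ^+ 2.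
have -> : 8 * Y * X = 4 * Y * X + 4 * Y * X by ring.
by rewrite addrA.
Qed.

Lemma sqnorm_sub (y c : V) : sqnorm (y - c) <= 2 * sqnorm y + 2 * sqnorm c.
Proof.
rewrite /sqnorm !mulr_sumr -big_split /=; apply: ler_sum => i _; rewrite !mxE.
set s := y 0 i; set t := c 0 i.
rewrite -subr_ge0 (_ : _ - _ = (s + t) ^+ 2); first exact: sqr_ge0.
by ring.
Qed.

Lemma S_le (y : V) : Sf y <= nd%:R.
Proof.
apply: (@le_trans _ _ (\sum_(k < nd) (1 : R))); first by apply: ler_sum => k _; exact: Ek_le1.
by rewrite sumr_const card_ord.
Qed.

Lemma F_bound (y : V) : `|Ff y| <= `|ln c0| + `|ln (c0 * nd%:R)|
   + 2 * a * sqnorm (b (Ordinal nd0)) + 2 * a * sqnorm y.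
Proof.
set k0 := Ordinal nd0.
have up : Ff y <= ln (c0 * nd%:R).
  rewrite /Ff ler_ln ?posrE ?mulr_gt0 ?S_gt0 ?ltr0n //.
  by rewrite ler_wpM2l ?S_le // ltW.
have lo : ln c0 - a * sqnorm (y - b k0) <= Ff y.
  have -> : ln c0 - a * sqnorm (y - b k0) = ln (c0 * Ek k0 y).
    by rewrite lnM ?posrE ?Ek_gt0 // /Ek expRK mulNr.
  rewrite /Ff ler_ln ?posrE ?mulr_gt0 ?S_gt0 ?Ek_gt0 //.
  by rewrite ler_wpM2l ?Ek_le_S // ltW.
have hs := sqnorm_sub y (b k0).
have h1 : ln (c0 * nd%:R) <= `|ln (c0 * nd%:R)| by exact: ler_norm.
have h2 : - `|ln c0| <= ln c0 by rewrite lerNl -normrN ler_norm.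
have hq := Q_ge0 y; have hb := Q_ge0 (b k0).
have n1 : 0 <= `|ln c0| by exact: normr_ge0.
have n2 : 0 <= `|ln (c0 * nd%:R)| by exact: normr_ge0.
have ha := ler_wpM2l (ltW a0) hs.
have p1 : 0 <= a * sqnorm (b k0) by apply: mulr_ge0; [exact: ltW|].
have p2 : 0 <= a * sqnorm y by apply: mulr_ge0; [exact: ltW|].
rewrite ler_norml; apply/andP; split; lra.
Qed.

End KDE.

Unset Implicit Arguments. Set Strict Implicit.

Lemma in_H_of_bound (R : realType) n (u : 'rV[R]_n -> R) (K : R) m : 0 <= K ->
  (forall y, `|u y| <= K * (1 + sqnorm y) ^+ m) -> in_H u.
Proof.
move=> K0 hu; rewrite /in_H.
apply: (@gauss_poly R n _ (K ^+ 2) (m * 2)); first exact: exprn_ge0.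
  by move=> y; exact: sqr_ge0.
move=> y; rewrite -real_normK ?num_real // exprM -exprMn.
apply: lerXn2r; [by rewrite nnegrE| |exact: hu].
by rewrite nnegrE; apply: mulr_ge0 => //; apply: exprn_ge0; have := Q_ge0 y; lra.
Qed.

Lemma lb_lemma (R : realType) (M q : R) : 0 <= M -> 0 <= q -> 1 + M + q <= (1 + M) * (1 + q).
Proof. by move=> M0 q0; rewrite mulrDr !mulrDl !mul1r mulr1; have := mulr_ge0 M0 q0; lra. Qed.

Lemma bnd_lemma (R : realType) (A c q : R) : 0 <= A -> 0 <= c -> 0 <= q ->
  A + c * q <= (A + c) * (1 + q).
Proof.
move=> A0 c0 q0; rewrite mulrDr mulr1 mulrDl.
have := mulr_ge0 A0 q0; lra.
Qed.

Lemma bnd2_lemma (R : realType) (a2 b2 M q : R) : 0 <= a2 -> 0 <= b2 -> 0 <= M -> 0 <= q ->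
  a2 + b2 * (1 + M + q) ^+ 2 <= (a2 + b2 * (1 + M) ^+ 2) * (1 + q) ^+ 2.
Proof.
move=> a20 b20 M0 q0.
have h1 : (1 + M + q) ^+ 2 <= ((1 + M) * (1 + q)) ^+ 2.
  apply: lerXn2r; rewrite ?nnegrE; [lra| |exact: lb_lemma].
  by apply: mulr_ge0; lra.
have h2 : 1 <= (1 + q) ^+ 2.
  by rewrite -[1](expr1n _ 2); apply: lerXn2r; rewrite ?nnegrE; lra.
rewrite mulrDl; apply: lerD.
  by rewrite -{1}[a2]mulr1; apply: ler_wpM2l.
by rewrite -mulrA -exprMn; apply: ler_wpM2l.
Qed.

Theorem proposition1 (R : realType) (nu nd : nat) (eta : 'I_nd -> 'rV[R]_nu) :
  (0 < nu)%N -> (1 < nd)%N ->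
  nd%:R^-1 *: \sum_(j < nd) eta j = 0 ->
  (nd%:R - 1)^-1 *: \sum_(j < nd) ((eta j)^T *m eta j) = 1%:M ->
  let f := fun y : 'rV[R]_nu => ln (pH eta y) in
  let g := fun (j : 'I_nu) (y : 'rV[R]_nu) => 'D_(ebasis j) f y in
  let ghat := fun y : 'rV[R]_nu => enorm (\row_(j < nu) g j y) in
  let h := fun y : 'rV[R]_nu => \sum_(j < nu) 'D_(ebasis j) (g j) y in
  (* (i) *)
  (continuous f /\ in_H f) /\
  (* (ii) *)
  ((forall (j : 'I_nu) (y : 'rV[R]_nu), derivable f y (ebasis j)) /\
   continuous (fun y : 'rV[R]_nu => \row_(j < nu) g j y) /\
   (forall j : 'I_nu, in_H (g j)) /\ in_H ghat /\
   (gauss_expect (fun y => (ghat y ^+ 4)%R) < +oo)%E) /\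
  (* (iii) *)
  ((forall (j : 'I_nu) (y : 'rV[R]_nu), derivable (g j) y (ebasis j)) /\
   continuous h /\ in_H h).
Proof.
move=> nu0 nd1 _ _ f g ghat h.
have nd0 : (0 < nd)%N by apply: ltnW.
set s := kde_s R nu nd; set sh := kde_shat R nu nd.
have s0 : 0 < s.
  rewrite /s /kde_s powR_gt0 // divr_gt0 // mulr_gt0 ?ltr0n //.
have sh0 : 0 < sh.
  rewrite /sh /kde_shat -/s divr_gt0 // sqrtr_gt0.
  have : 1 <= nd%:R :> R by rewrite ler1n.
  move=> h1; apply: ltr_wpDr; last exact: exprn_gt0.
  by rewrite divr_ge0 ?subr_ge0 // ler0n.
pose a : R := 1 / (2 * sh ^+ 2).
pose b := fun k => (sh / s) *: eta k.
pose c0 : R := nd%:R^-1 * ((Num.sqrt (2 * pi) * sh) ^+ nu)^-1.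
have a0 : 0 < a by rewrite /a divr_gt0 // mulr_gt0 // exprn_gt0.
have c00 : 0 < c0.
  rewrite /c0 mulr_gt0 ?invr_gt0 ?ltr0n // exprn_gt0 // mulr_gt0 // sqrtr_gt0.
  by rewrite mulr_gt0 // pi_gt0.
have pHE y : pH eta y = c0 * Sf a b y.
  rewrite /pH /Sf /Ek /c0 -[RHS]mulrA [X in _ = _ * X]mulr_sumr; congr (_ * _).
have fE : f = Ff a c0 b by apply: funext => y; rewrite /f /Ff pHE.
have gE j : g j = Gf a b j.
  by apply: funext => y; rewrite /g fE; case: (dF a b c00 nd0 y j) => _ ->.
have hE : h = fun y => \sum_(j < nu) Hf a b j y.
  apply: funext => y; rewrite /h; apply: eq_bigr => j _; rewrite gE.
  by case: (dG a b nd0 y j) => _ ->.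
have lb := @lb_lemma R.
have Mb0 := Mb_ge0 b.
set M := Mb b.
have a0' : 0 <= a by exact: ltW.
set K2 := 2 * a * (1 + M).
have K20 : 0 <= K2 by rewrite /K2; apply: mulr_ge0; [apply: mulr_ge0|apply: addr_ge0].
have Gb j y : `|Gf a b j y| <= K2 * (1 + sqnorm y) ^+ 1.
  apply: le_trans (G_bound b a0 nd0 j y) _.
  rewrite expr1 /K2 -[2 * a * (1 + M) * _]mulrA; apply: ler_wpM2l; first exact: mulr_ge0.
  by apply: lb => //; exact: Q_ge0.
have ghat2 y : ghat y ^+ 2 <= nu%:R * K2 ^+ 2 * (1 + sqnorm y) ^+ 2.
  rewrite /ghat /enorm sqr_sqrtr ?Q_ge0 // /sqnorm.
  have gb j : (\row_(j0 < nu) g j0 y) 0 j ^+ 2 <= K2 ^+ 2 * (1 + sqnorm y) ^+ 2.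
    rewrite mxE gE -real_normK ?num_real // -exprMn; apply: lerXn2r.
    - by rewrite nnegrE.
    - by rewrite nnegrE; apply: mulr_ge0 => //; have := Q_ge0 y; lra.
    - by have := Gb j y; rewrite expr1.
  apply: le_trans (ler_sum _ (fun j _ => gb j)) _.
  by rewrite sumr_const card_ord -[X in _ <= X]mulrA mulr_natl; apply: lexx.
split; [split|split; [split; [|split; [|split; [|split]]]|split; [|split]]].
- rewrite fE => y; apply: differentiable_continuous; exact: dif_F.
- rewrite fE.
  apply: (@in_H_of_bound R nu _ (`|ln c0| + `|ln (c0 * nd%:R)| + 2 * a * sqnorm (b (Ordinal nd0)) + 2 * a) 1).
    apply: addr_ge0; last exact: mulr_ge0.
    apply: addr_ge0; last by apply: mulr_ge0; [exact: mulr_ge0|exact: Q_ge0].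
    by apply: addr_ge0; exact: normr_ge0.
  move=> y; apply: le_trans (F_bound b a0 c00 nd0 y) _; rewrite expr1.
  apply: bnd_lemma; [|exact: mulr_ge0|exact: Q_ge0].
  apply: addr_ge0; last by apply: mulr_ge0; [exact: mulr_ge0|exact: Q_ge0].
  by apply: addr_ge0; exact: normr_ge0.
- by move=> j y; rewrite fE; case: (dF a b c00 nd0 y j).
- have -> : (fun y : 'rV[R]_nu => \row_(j < nu) g j y) =
      (fun y => \sum_(j < nu) (Gf a b j y *: (ebasis j : 'rV[R]_nu))).
    apply: funext => y; apply/rowP => i; rewrite mxE summxE (bigD1 i) //= big1.
      by rewrite !mxE !eqxx mulr1 addr0 gE.
    by move=> j ji; rewrite !mxE eqxx (eq_sym i j) (negbTE ji) mulr0.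
  move=> y; apply: differentiable_continuous.
  have := @differentiable_sum R _ _ nu (fun j z => Gf a b j z *: (ebasis j : 'rV[R]_nu)) y.
  rewrite fct_sumE; apply => j.
  by apply: differentiableZl; exact: dif_G.
- move=> j; rewrite gE; apply: (@in_H_of_bound R nu _ K2 1) => // y; exact: Gb.
- rewrite /in_H; apply: (@gauss_poly R nu _ (nu%:R * K2 ^+ 2) 2).
  + by apply: mulr_ge0; [exact: ler0n|exact: exprn_ge0].
  + by move=> y; exact: sqr_ge0.
  + exact: ghat2.
- apply: (@gauss_poly R nu _ ((nu%:R * K2 ^+ 2) ^+ 2) 4).
  + by apply: exprn_ge0; apply: mulr_ge0; [exact: ler0n|exact: exprn_ge0].
  + by move=> y; rewrite (_ : 4 = 2 * 2)%N // exprM; exact: sqr_ge0.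
  + move=> y; rewrite (_ : 4 = 2 * 2)%N // !exprM -exprMn; apply: lerXn2r.
    * by rewrite nnegrE; exact: sqr_ge0.
    * rewrite nnegrE; apply: mulr_ge0; last by apply: exprn_ge0; have := Q_ge0 y; lra.
      by apply: mulr_ge0; [exact: ler0n|exact: exprn_ge0].
    * exact: ghat2.
- by move=> j y; rewrite gE; case: (dG a b nd0 y j).
- rewrite hE => y; apply: differentiable_continuous; apply: dif_sum => j; exact: dif_H.
- rewrite hE; set K3 := 2 * a + 8 * a ^+ 2 * (1 + M) ^+ 2.
  have K30 : 0 <= K3.
    by rewrite /K3; apply: addr_ge0; [exact: mulr_ge0|apply: mulr_ge0; [apply: mulr_ge0 => //; exact: exprn_ge0|exact: sqr_ge0]].
  apply: (@in_H_of_bound R nu _ (nu%:R * K3) 2).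
    by apply: mulr_ge0 => //; exact: ler0n.
  move=> y; apply: le_trans (ler_norm_sum _ _ _) _.
  have hb j : `|Hf a b j y| <= K3 * (1 + sqnorm y) ^+ 2.
    apply: le_trans (H_bound b a0 nd0 j y) _.
    apply: bnd2_lemma => //; [exact: mulr_ge0|apply: mulr_ge0 => //; exact: exprn_ge0|exact: Q_ge0].
  apply: le_trans (ler_sum _ (fun j _ => hb j)) _.
  by rewrite sumr_const card_ord -[X in _ <= X]mulrA mulr_natl; apply: lexx.
Qed.
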